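(* Let $S\subset\mathbb N$, $r\ge2$ and $d\ge1$. If $E$ is a Bohr$_0$ set of dimension $d$ and $S$ is $2^dr$-large, then $S\cap E$ is $r$-large.
   Context: $\|t\|$ is the distance to the nearest integer. $E\subset\mathbb N$ is a Bohr$_0$ set if it contains a set $\{n\in\mathbb N:\|n\alpha_1\|<\varepsilon,\dots,\|n\alpha_k\|<\varepsilon\}$ for some $k\in\mathbb N$, $\alpha_1,\dots,\alpha_k\in\mathbb T$, $\varepsilon>0$; the least such $k$ is its dimension. For $m\ge2$, $R\subset\mathbb N$ is $m$-large if every coloring of $\mathbb N$ with $m$ colors contains arbitrarily long monochromatic arithmetic progressions with common difference in $R$. *)

(* Defs.v *)
From Stdlib Require Import Reals Lia.
Open Scope R_scope.

Definition dist_int (t : R) : R :=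
  Rmin (frac_part t) (1 - frac_part t).

(* N = {1,2,3,...}; subsets of N are predicates on nat (values at 0 irrelevant). *)

(* The Bohr_0 neighbourhood {n in N : ||n a_i|| < eps, i < k}. Frequencies in T
   are represented by real representatives (||n a|| only depends on a mod 1). *)
Definition bohr0_of_rank (k : nat) (E : nat -> Prop) : Prop :=
  exists (alpha : nat -> R) (eps : R), 0 < eps /\
    forall n : nat, (1 <= n)%nat ->
      (forall i : nat, (i < k)%nat -> dist_int (INR n * alpha i) < eps) -> E n.

Definition bohr0_dim (E : nat -> Prop) (d : nat) : Prop :=
  bohr0_of_rank d E /\ forall k : nat, (k < d)%nat -> ~ bohr0_of_rank k E.

Definition large (m : nat) (Rs : nat -> Prop) : Prop :=
  forall c : nat -> nat, (forall n, (1 <= n)%nat -> (c n < m)%nat) ->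
  forall L : nat, exists a s : nat,
    (1 <= a)%nat /\ (1 <= s)%nat /\ Rs s /\
    forall i : nat, (i < L)%nat -> c (a + i * s)%nat = c a.

(* Main.v *)
Require Import Defs.
From Stdlib Require Import Reals Lia Lra ZArith.

Local Open Scope R_scope.

Lemma frac_step (X t : R) : exists z : Z,
  frac_part (X + t) - frac_part X = frac_part t + IZR z.
Proof.
  exists (Int_part X + Int_part t - Int_part (X + t))%Z.
  unfold frac_part. rewrite minus_IZR, plus_IZR. ring.
Qed.

Lemma int_between (z : Z) (a : Z) : IZR a < IZR z -> IZR z < IZR a + 1 -> False.
Proof.
  intros H1 H2. rewrite <- plus_IZR in H2.
  apply lt_IZR in H1. apply lt_IZR in H2. lia.
Qed.

Lemma int_eq (z a : Z) : IZR a - 1 < IZR z -> IZR z < IZR a + 1 -> z = a.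
Proof.
  intros H1 H2. rewrite <- minus_IZR in H1. rewrite <- plus_IZR in H2.
  apply lt_IZR in H1. apply lt_IZR in H2. lia.
Qed.

Lemma core (y : nat -> R) (f eps c : R) (M : nat) :
  0 <= f < 1 -> eps <= f -> eps <= 1 - f -> 1/2 <= INR M * eps ->
  (forall i, (i <= M)%nat -> c <= y i < c + 1/2) ->
  (forall i, (i < M)%nat -> exists z : Z, y (S i) - y i = f + IZR z) ->
  False.
Proof.
  intros Hf He1 He2 HM Hy Hs.
  assert (Hd : exists d, eps <= Rabs d /\
             forall i, (i < M)%nat -> y (S i) - y i = d).
  { destruct (Rtotal_order f (1/2)) as [Hlt|[Heq|Hgt]].
    - exists f. split. { rewrite Rabs_right; lra. }
      intros i Hi. destruct (Hs i Hi) as [z Hz].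
      pose proof (Hy i ltac:(lia)). pose proof (Hy (S i) ltac:(lia)).
      assert (z = 0%Z) by (apply int_eq; simpl; lra). subst z. simpl in Hz. lra.
    - destruct M as [|M].
      + simpl in HM. lra.
      + exfalso. destruct (Hs 0%nat ltac:(lia)) as [z Hz].
        pose proof (Hy 0%nat ltac:(lia)). pose proof (Hy 1%nat ltac:(lia)).
        apply (int_between z (-1)%Z); simpl; lra.
    - exists (f - 1). split. { rewrite Rabs_left; lra. }
      intros i Hi. destruct (Hs i Hi) as [z Hz].
      pose proof (Hy i ltac:(lia)). pose proof (Hy (S i) ltac:(lia)).
      assert (z = (-1)%Z) by (apply int_eq; simpl; lra). subst z. simpl in Hz. lra. }
  destruct Hd as [d [Hd Hstep]].
  assert (Hind : forall i, (i <= M)%nat -> y i = y 0%nat + INR i * d).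
  { induction i as [|i IH]; intros Hi.
    - simpl. ring.
    - rewrite S_INR. pose proof (Hstep i ltac:(lia)). rewrite IH in H by lia. lra. }
  pose proof (Hind M (le_n _)).
  pose proof (Hy M (le_n _)). pose proof (Hy 0%nat ltac:(lia)).
  assert (Hab : Rabs (INR M * d) < 1/2).
  { apply Rabs_def1; lra. }
  rewrite Rabs_mult, (Rabs_right (INR M)) in Hab by (apply Rle_ge, pos_INR).
  assert (INR M * eps <= INR M * Rabs d) by (apply Rmult_le_compat_l; [apply pos_INR|lra]).
  lra.
Qed.

Definition bit (beta : R) (n : nat) : nat :=
  if Rlt_dec (frac_part (INR n * beta)) (1/2) then 0%nat else 1%nat.

Lemma bit_le (beta : R) n : (bit beta n <= 1)%nat.
Proof. unfold bit. destruct Rlt_dec; lia. Qed.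

Lemma archM (eps : R) : 0 < eps -> exists M : nat, 1/2 <= INR M * eps.
Proof.
  intros He. destruct (archimed (/ eps)) as [H1 _].
  assert (Hp : (0 < up (/ eps))%Z).
  { apply lt_IZR. simpl. pose proof (Rinv_0_lt_compat eps He). lra. }
  exists (Z.to_nat (up (/ eps))).
  rewrite INR_IZR_INZ, Z2Nat.id by lia.
  apply Rmult_lt_compat_r with (r := eps) in H1; auto.
  rewrite Rinv_l in H1 by lra. lra.
Qed.

Lemma large_mono (m : nat) (P Q : nat -> Prop) :
  large m P -> (forall s, (1 <= s)%nat -> P s -> Q s) -> large m Q.
Proof.
  intros H HPQ c Hc L. destruct (H c Hc L) as [a [s [H1 [H2 [H3 H4]]]]].
  exists a, s. repeat split; auto.
Qed.

Lemma one_step (S : nat -> Prop) (m : nat) (beta eps : R) :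
  0 < eps -> large (2 * m) S ->
  large m (fun s => S s /\ dist_int (INR s * beta) < eps).
Proof.
  intros He HL c Hc L.
  destruct (archM eps He) as [M HM].
  set (c' := fun n => (2 * c n + bit beta n)%nat).
  assert (Hc' : forall n, (1 <= n)%nat -> (c' n < 2 * m)%nat).
  { intros n Hn. unfold c'. pose proof (Hc n Hn). pose proof (bit_le beta n). lia. }
  destruct (HL c' Hc' (Nat.max L (Datatypes.S M))) as [a [s [Ha [Hs [HS Hap]]]]].
  assert (Heq : forall i, (i < Nat.max L (Datatypes.S M))%nat ->
            c (a + i * s)%nat = c a /\ bit beta (a + i * s) = bit beta a).
  { intros i Hi. pose proof (Hap i Hi). unfold c' in H.
    pose proof (bit_le beta (a + i * s)). pose proof (bit_le beta a). lia. }
  exists a, s. split; [|split; [|split]]; auto.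
  - split; auto.
    set (y := fun i => frac_part (INR (a + i * s) * beta)).
    set (theta := INR s * beta).
    apply Rnot_le_lt. intro Hd. unfold dist_int in Hd.
    pose proof (Rmin_l (frac_part theta) (1 - frac_part theta)).
    pose proof (Rmin_r (frac_part theta) (1 - frac_part theta)).
    pose proof (base_fp theta).
    set (cc := if Rlt_dec (frac_part (INR a * beta)) (1/2) then 0 else 1/2).
    apply (core y (frac_part theta) eps cc M); try lra.
    + intros i Hi. destruct (Heq i ltac:(lia)) as [_ Hb].
      unfold y, cc. unfold bit in Hb. pose proof (base_fp (INR (a + i * s) * beta)).
      destruct (Rlt_dec (frac_part (INR (a + i * s) * beta)) (1/2));
      destruct (Rlt_dec (frac_part (INR a * beta)) (1/2)); try discriminate; lra.
    + intros i _. unfold y.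
      destruct (frac_step (INR (a + i * s) * beta) theta) as [z Hz].
      exists z. rewrite <- Hz. f_equal. f_equal. unfold theta.
      rewrite !plus_INR, !mult_INR, S_INR. ring.
  - intros i Hi. apply (Heq i). lia.
Qed.

Lemma multi (k : nat) : forall (m : nat) (S : nat -> Prop) (alpha : nat -> R) (eps : R),
  0 < eps -> large (2 ^ k * m) S ->
  large m (fun s => S s /\ forall i, (i < k)%nat -> dist_int (INR s * alpha i) < eps).
Proof.
  induction k as [|k IH]; intros m S alpha eps He HL.
  - assert (E : (2 ^ 0 * m = m)%nat) by (simpl; lia). rewrite E in HL.
    apply (large_mono _ _ _ HL). intros s _ Hs. split; auto. intros; lia.
  - assert (E : (2 ^ Datatypes.S k * m = 2 ^ k * (2 * m))%nat)
      by (rewrite Nat.pow_succ_r'; ring).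
    rewrite E in HL.
    pose proof (IH (2 * m)%nat S alpha eps He HL) as H1.
    pose proof (one_step _ m (alpha k) eps He H1) as H2.
    apply (large_mono _ _ _ H2). intros s _ [[Hs Hi] Hk]. split; auto.
    intros i Hik. destruct (Nat.eq_dec i k) as [->|Hne]; auto. apply Hi. lia.
Qed.

Theorem mainTheorem18 (S E : nat -> Prop) (r d : nat) :
  (2 <= r)%nat -> (1 <= d)%nat ->
  bohr0_dim E d ->
  large (2 ^ d * r) S ->
  large r (fun n => S n /\ E n).
Proof.
  intros _ _ [[alpha [eps [He HE]]] _] HL.
  pose proof (multi d r S alpha eps He HL) as H.
  apply (large_mono _ _ _ H). intros s Hs1 [Hs HB]. split; auto.
Qed.
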